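(* For real $\omega$ and $k\in\mathbb{Z}_+$ let $\mu_k(\omega)=\int_{-1}^1 x^k{\mathrm e}^{{\mathrm i}\omega x}\,\mathrm{d}x$, and for $n\geq 0$ let $h_n(\omega)=\det[\mu_{i+j}(\omega)]_{i,j=0}^{n}$ be the $(n+1)\times(n+1)$ Hankel determinant. Then there is no $n\geq 1$ and $\omega^*>0$ such that $h_{n-1}(\omega^* )=h_n(\omega^* )=0$. *)

(* Defs.v *)
From HB Require Import structures.
From mathcomp Require Import all_boot all_order all_algebra.
From mathcomp Require Import all_classical all_reals all_analysis.
From mathcomp Require Import complex.
Set Implicit Arguments. Unset Strict Implicit. Unset Printing Implicit Defensive.
Import Order.TTheory GRing.Theory Num.Theory.
Local Open Scope ring_scope.
Local Open Scope classical_set_scope.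

(* mu_k(w) = \int_{-1}^1 x^k e^{i w x} dx, with e^{i w x} = cos(w x) + i sin(w x);
   the (Lebesgue) integral of the complex integrand is taken componentwise. *)
Definition moment (R : realType) (k : nat) (w : R) : R[i] :=
  Complex (Rintegral (@lebesgue_measure R) `[-1%R, 1%R] (fun x => x ^+ k * cos (w * x)))
          (Rintegral (@lebesgue_measure R) `[-1%R, 1%R] (fun x => x ^+ k * sin (w * x))).

Definition hankel_det (R : realType) (n : nat) (w : R) : R[i] :=
  \det (\matrix_(i < n.+1, j < n.+1) moment (i + j)%N w).

(* Main.v *)
Require Import Defs.
From HB Require Import structures.
From mathcomp Require Import all_boot all_order all_algebra.
From mathcomp Require Import all_classical all_reals all_analysis.
From mathcomp Require Import complex.
From mathcomp Require Import zify.
From mathcomp.algebra_tactics Require Import ring lra.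
Set Implicit Arguments. Unset Strict Implicit. Unset Printing Implicit Defensive.
Import Order.TTheory GRing.Theory Num.Theory numFieldNormedType.Exports.
Local Open Scope ring_scope.

Section Alg.
Variables (K : numFieldType) (mu : nat -> K) (z E E' : K).
Hypotheses (z0 : z != 0) (E0 : E != 0) (E'0 : E' != 0).
Hypothesis rec : forall k, z * mu k + k%:R * mu k.-1 = E - (-1) ^+ k * E'.

Definition Lam (p : {poly K}) := \sum_(i < size p) p`_i * mu i.

Lemma LamE N (p : {poly K}) : (size p <= N)%N -> Lam p = \sum_(i < N) p`_i * mu i.
Proof.
move=> sN; rewrite /Lam (big_ord_widen N (fun i => p`_i * mu i) sN) [RHS](bigID (fun i : 'I_N => (i < size p)%N)) /=.
rewrite [X in _ = _ + X]big1 ?addr0 // => i; rewrite -leqNgt => hi.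
by rewrite nth_default // mul0r.
Qed.

Lemma LamD (p q : {poly K}) : Lam (p + q) = Lam p + Lam q.
Proof.
pose N := maxn (size p) (size q).
rewrite (@LamE N) ?size_polyD // (@LamE N p) ?leq_maxl // (@LamE N q) ?leq_maxr //.
by rewrite -big_split /=; apply: eq_bigr => i _; rewrite coefD mulrDl.
Qed.

Lemma LamZ c (p : {poly K}) : Lam (c *: p) = c * Lam p.
Proof.
rewrite (@LamE (size p)) ?size_scale_leq // /Lam mulr_sumr.
by apply: eq_bigr => i _; rewrite coefZ mulrA.
Qed.

Lemma LamN (p : {poly K}) : Lam (- p) = - Lam p.
Proof. by rewrite -scaleN1r LamZ mulN1r. Qed.

Lemma LamB (p q : {poly K}) : Lam (p - q) = Lam p - Lam q.
Proof. by rewrite LamD LamN. Qed.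

Lemma Lam0 : Lam 0 = 0.
Proof. by rewrite /Lam size_poly0 big_ord0. Qed.

Lemma size_deriv_leq (p : {poly K}) : (size p^`() <= (size p).-1)%N.
Proof.
have [->|p0] := eqVneq p 0; first by rewrite deriv0 size_poly0.
by have := lt_size_deriv p0; case: (size p).
Qed.

Lemma LamId (F : {poly K}) : Lam (F^`() + z *: F) = E * F.[1] - E' * F.[-1].
Proof.
set N := size F.
have sF : (size F <= N.+1)%N by rewrite leqW.
rewrite (@LamE N.+1); last first.
  apply: (leq_trans (size_polyD _ _)); rewrite geq_max (leq_trans (size_scale_leq _ _)) // andbT.
  by apply: (leq_trans (size_deriv_leq _)); rewrite /N; case: (size F) => //= n; rewrite leqW.
rewrite !(horner_coef_wide _ sF) !mulr_sumr -sumrB.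
have -> : \sum_(i < N.+1) (E * (F`_i * 1 ^+ i) - E' * (F`_i * (-1) ^+ i))
        = \sum_(i < N.+1) F`_i * (z * mu i + i%:R * mu i.-1).
  apply: eq_bigr => i _; rewrite rec expr1n mulr1; move: (F`_i) ((-1) ^+ i : K) => a b. ring.
under [RHS]eq_bigr do rewrite mulrDr.
rewrite big_split /=.
under eq_bigr do rewrite coefD coef_deriv coefZ mulrDl.
rewrite big_split /= addrC; congr (_ + _).
  by apply: eq_bigr => i _; ring.
rewrite big_ord_recr big_ord_recl /= mul0r mulr0 add0r.
rewrite [F`_N.+1]nth_default ?mul0rn ?mul0r ?addr0 //.
by apply: eq_bigr => i _; rewrite /bump leq0n add1n add0n -mulr_natl; ring.
Qed.


Definition upol : {poly K} := 1 - 'X^2.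
Definition psi : {poly K} := upol^`() + z%:P * upol.

Lemma Pearson (G : {poly K}) : Lam (upol * G^`() + psi * G) = 0.
Proof.
have -> : upol * G^`() + psi * G = (upol * G)^`() + z *: (upol * G).
  by rewrite derivM -mul_polyC /psi; ring.
rewrite LamId !hornerM /upol !hornerE /=.
by rewrite sqrrN expr1n subrr !mulr0 !mul0r subrr.
Qed.

Definition orth (A : {poly K}) n := forall g : {poly K}, (size g <= n)%N -> Lam (A * g) = 0.

Lemma sizeM_le (p q : {poly K}) a b : (size p <= a)%N -> (size q <= b)%N -> (size (p * q)%R <= (a + b).-1)%N.
Proof. move=> hp hq; apply: (leq_trans (size_polyMleq p q)); lia. Qed.

Lemma sizeM_le' (p q : {poly K}) a b c : (size p <= a)%N -> (size q <= b)%N -> ((a + b).-1 <= c)%N -> (size (p * q)%R <= c)%N.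
Proof. by move=> hp hq hc; apply: leq_trans (sizeM_le hp hq) hc. Qed.

Lemma sizeD_le (p q : {poly K}) a : (size p <= a)%N -> (size q <= a)%N -> (size (p + q)%R <= a)%N.
Proof. by move=> hp hq; apply: (leq_trans (size_polyD p q)); rewrite geq_max hp hq. Qed.

Lemma L1 (A : {poly K}) n (g : {poly K}) : orth A n -> (size g <= n.+1)%N -> Lam (A * g) = g`_n * Lam (A * 'X^n).
Proof.
move=> oA sg.
have Hg : g = (g - g`_n *: 'X^n) + g`_n *: 'X^n by rewrite subrK.
rewrite {1}Hg mulrDr LamD -scalerAr LamZ oA ?add0r //.
apply/leq_sizeP => j hj; rewrite coefB coefZ coefXn.
have [->|ne] := eqVneq j n; first by rewrite ?eqxx mulr1 subrr.
rewrite mulr0 subr0 nth_default //.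
apply: (leq_trans sg); rewrite ltn_neqAle eq_sym ne hj //.
Qed.

Lemma orth_step (A : {poly K}) n : orth A n -> Lam (A * 'X^n) = 0 -> orth A n.+1.
Proof. by move=> oA h g sg; rewrite (L1 oA sg) h mulr0. Qed.

Lemma size_upol : (size upol <= 3)%N.
Proof. by apply: sizeD_le; rewrite ?size_polyN ?size_polyXn ?size_poly1. Qed.

Lemma Cstep (A : {poly K}) N : A != 0 -> orth A N -> (size A < N)%N -> Lam (A * 'X^N) = 0.
Proof.
move=> A0 oA sAN.
set s := size A.
have s1 : (0 < s)%N by rewrite lt0n size_poly_eq0.
set e := (N - s - 1)%N.
have eN : N = (e + s + 1)%N by rewrite /e; lia.
set P := 'X^e * A.
have sP : (size P <= e + s)%N.
  rewrite /P; have := @sizeM_le ('X^e) A e.+1 s; rewrite size_polyXn => /(_ (leqnn _) (leqnn _)); lia.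
set B0 := upol * P^`() + upol * ('X^e * A^`()) + (upol^`() + z%:P) * P.
have eq1 : upol * (P * A)^`() + psi * (P * A) = A * B0 - z *: (A * ('X^2 * P)).
  rewrite derivM -mul_polyC /psi /B0 /P /upol; ring.
have sB0 : (size B0 <= N)%N.
  have su := size_upol.
  have su' : (size upol^`() <= 2)%N by apply: (leq_trans (size_deriv_leq _)); lia.
  apply: sizeD_le; first apply: sizeD_le.
  - apply: (@sizeM_le' _ _ 3 (e + s).-1) => //; last lia.
    by apply: (leq_trans (size_deriv_leq _)); lia.
  - apply: (@sizeM_le' _ _ 3 (e + s).-1) => //; last lia.
    have := @sizeM_le ('X^e) (A^`()) e.+1 s.-1; rewrite size_polyXn.
    move=> /(_ (leqnn _) (size_deriv_leq _)); lia.
  - apply: (@sizeM_le' _ _ 2 (e + s)) => //; last lia.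
    by apply: sizeD_le => //; rewrite size_polyC; case: (_ != _).
have := Pearson (P * A); rewrite eq1 LamB LamZ (oA _ sB0) sub0r => /eqP.
rewrite oppr_eq0 mulf_eq0 (negbTE z0) /= => /eqP.
have sX : (size ('X^2 * P)%R <= N.+1)%N.
  have := @sizeM_le ('X^2) P 3 (e + s); rewrite size_polyXn => /(_ (leqnn _) sP); lia.
rewrite (L1 oA sX) => /eqP; rewrite mulf_eq0 => /orP [|/eqP //].
rewrite /P mulrA -exprD mulrC coefMXn.
have -> : (N < 2 + e)%N = false by lia.
have -> : (N - (2 + e) = s.-1)%N by lia.
by rewrite -lead_coefE lead_coef_eq0 (negbTE A0).
Qed.

Lemma Cfull (A : {poly K}) N : A != 0 -> orth A N -> (size A < N)%N -> forall g, Lam (A * g) = 0.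
Proof.
move=> A0 oA sAN.
have H : forall k, orth A (N + k).
  elim=> [|k IH]; first by rewrite addn0.
  rewrite addnS; apply: orth_step => //; apply: Cstep => //; lia.
by move=> g; apply: (H (size g)); lia.
Qed.

Lemma NoAnnih n (A : {poly K}) : (size A <= n)%N -> (forall g, Lam (A * g) = 0) -> A = 0.
Proof.
elim: n A => [|n IH] A sA hA; first by apply/eqP; rewrite -size_poly_eq0 -leqn0.
have hD : forall g, Lam (A^`() * g) = E * A.[1] * g.[1] - E' * A.[-1] * g.[-1].
  move=> g; have := LamId (A * g).
  have -> : (A * g)^`() + z *: (A * g) = A^`() * g + A * (g^`() + z *: g).
    by rewrite derivM -!mul_polyC; ring.
  by rewrite LamD hA addr0 !hornerM !mulrA.
have h1 : A.[1] = 0.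
  have := hD (A * ('X + 1)); rewrite mulrCA hA !hornerE /=.
  have two : (1 + 1 : K) != 0 by rewrite -mulr2n pnatr_eq0.
  rewrite addNr mulr0 subr0 => /esym/eqP.
  by rewrite !mulf_eq0 (negbTE E0) (negbTE two) /= orbF orbb => /eqP.
have h2 : A.[-1] = 0.
  have := hD (A * ('X - 1)); rewrite mulrCA hA !hornerE /=.
  have two : (-1 - 1 : K) != 0 by rewrite -opprD oppr_eq0 -mulr2n pnatr_eq0.
  rewrite subrr mulr0 sub0r => /esym/eqP; rewrite oppr_eq0.
  by rewrite !mulf_eq0 (negbTE E'0) (negbTE two) /= orbF orbb => /eqP.
have D0 : A^`() = 0.
  apply: (IH _ _) => [|g]; first by apply: (leq_trans (size_deriv_leq _)); lia.
  by rewrite hD h1 h2 !mulr0 !mul0r subrr.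
have sA1 : (size A <= 1)%N.
  apply/leq_sizeP => j hj; have := coef_deriv A j.-1; rewrite D0 coef0 prednK //.
  by move/esym/eqP; rewrite mulrn_eq0 => /orP [/eqP|/eqP] //; lia.
by rewrite (size1_polyC sA1) -[A`_0](hornerC _ 1) -(size1_polyC sA1) h1.
Qed.

Lemma Cfalse (A : {poly K}) N : A != 0 -> orth A N -> (size A < N)%N -> False.
Proof.
move=> A0 oA sAN; have := NoAnnih (leqnn _) (Cfull A0 oA sAN).
by move/eqP; rewrite (negbTE A0).
Qed.


Lemma PairStep k (A B : {poly K}) : A != 0 -> (size A <= k.+1)%N -> orth A k.+1 ->
  B != 0 -> (size B <= k.+2)%N -> orth B k.+2 ->
  exists R : {poly K}, [/\ R != 0, (size R <= k)%N & orth R k].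
Proof.
move=> A0 sA oA B0 sB oB.
have sAe : size A = k.+1.
  apply/eqP; rewrite eqn_leq sA /= leqNgt; apply/negP => h; exact: (Cfalse A0 oA h).
have sBe : size B = k.+2.
  apply/eqP; rewrite eqn_leq sB /= leqNgt; apply/negP => h; exact: (Cfalse B0 oB h).
have gA : Lam (A * 'X^(k.+1)) != 0.
  apply/negP => /eqP h; apply: (Cfalse A0 (orth_step oA h)); rewrite sAe //.
set D := B %/ A; set R := B %% A.
have eB : B = D * A + R := divp_eq B A.
have sD : size D = 2 by rewrite /D size_divp // sAe sBe; lia.
have sR : (size R <= k)%N by have := ltn_modp B A; rewrite A0 sAe.
have eR : R = B - D * A by rewrite {1}eB; ring.
have LR : forall g, Lam (R * g) = Lam (B * g) - Lam (A * (D * g)).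
  by move=> g; rewrite eR mulrBl LamB [D * A]mulrC -mulrA.
have oR : orth R k.
  move=> g sg; rewrite LR oB ?oA ?subrr //; last by lia.
  by apply: (@sizeM_le' _ _ 2 k) => //; rewrite sD.
exists R; split => //.
apply/negP => /eqP R0.
have := LR ('X^k); rewrite R0 mul0r Lam0 oB ?size_polyXn //.
have sDX : (size (D * 'X^k)%R <= k.+2)%N.
  by apply: (@sizeM_le' _ _ 2 k.+1) => //; rewrite ?sD ?size_polyXn.
rewrite (L1 oA sDX) coefMXn ?ltnn ?ltnSn /= subSnn sub0r => /esym/eqP; rewrite oppr_eq0 mulf_eq0 (negbTE gA) orbF.
have -> : D`_1 = lead_coef D by rewrite lead_coefE sD.
have -> : (k.+1 < k)%N = false by lia.
by rewrite lead_coef_eq0 -size_poly_eq0 sD.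
Qed.

Lemma Pair k (A B : {poly K}) : A != 0 -> (size A <= k.+1)%N -> orth A k.+1 ->
  B != 0 -> (size B <= k.+2)%N -> orth B k.+2 -> False.
Proof.
elim: k A B => [|k IH] A B A0 sA oA B0 sB oB.
  have [R [R0 sR _]] := PairStep A0 sA oA B0 sB oB.
  by move: sR; rewrite leqn0 size_poly_eq0 (negbTE R0).
have [R [R0 sR oR]] := PairStep A0 sA oA B0 sB oB.
exact: (IH R A R0 sR oR A0 sA oA).
Qed.

Definition Hk k : 'M[K]_k.+1 := \matrix_(i < k.+1, j < k.+1) mu (i + j)%N.

Lemma det_orth k : \det (Hk k) = 0 ->
  exists A : {poly K}, [/\ A != 0, (size A <= k.+1)%N & orth A k.+1].
Proof.
move/eqP/det0P => [v v0 hv].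
exists (\poly_(j < k.+1) v 0 (inord j)); split; first last.
- have H : forall n, (n <= k.+1)%N -> orth (\poly_(j < k.+1) v 0 (inord j)) n.
    elim=> [|n IH] hn.
      by move=> g; rewrite leqn0 size_poly_eq0 => /eqP ->; rewrite mulr0 Lam0.
    apply: orth_step; first by apply: IH; lia.
    have hn' : (n < k.+1)%N by [].
    rewrite (@LamE (n + k.+1)); last first.
      by apply: (@sizeM_le' _ _ k.+1 n.+1); rewrite ?size_poly ?size_polyXn //; lia.
    rewrite big_split_ord /= big1 ?add0r; last first.
      by move=> i _; rewrite coefMXn /= ltn_ord mul0r.
    have := congr1 (fun M : 'M[K]_(1, k.+1) => M 0 (Ordinal hn')) hv; rewrite !mxE => h.
    apply: etrans h; apply: eq_bigr => i _; rewrite coefMXn /= ltnNge leq_addr /= addnC addnK.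
    by rewrite coef_poly ltn_ord inord_val !mxE addnC.
  exact: H.
- exact: size_poly.
- apply: contraNneq v0 => hA; apply/eqP/rowP => j; rewrite !mxE.
  have := congr1 (fun p : {poly K} => p`_j) hA; rewrite coef_poly ltn_ord coef0 inord_val.
  by move=> ->.
Qed.

Lemma main_alg k : \det (Hk k) = 0 -> \det (Hk k.+1) = 0 -> False.
Proof.
move=> /det_orth [A [A0 sA oA]] /det_orth [B [B0 sB oB]].
exact: (Pair A0 sA oA B0 sB oB).
Qed.

End Alg.

Section Ana.
Variables (R : realType) (w : R).
Notation mu := (@lebesgue_measure R).

Lemma deriv_cont (g dg : R -> R) : (forall x : R, is_derive x 1 g (dg x)) -> continuous g.
Proof.
move=> h x; apply: differentiable_continuous; apply/derivable1_diffP.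
by have [] := h x.
Qed.

Lemma FTC11 (F f : R -> R) : (forall x : R, is_derive x 1 F (f x)) -> continuous f ->
  \int[mu]_(x in `[-1%R, 1%R]) f x = F 1 - F (-1).
Proof.
move=> dF cf.
have cF := deriv_cont dF.
have h : (-1 < 1 :> R) by rewrite gtrN.
rewrite /Rintegral (@continuous_FTC2 _ f F _ _ h) /=.
- by [].
- exact: continuous_subspaceT.
- split.
  + by move=> x _; have [] := dF x.
  + exact/cvg_at_right_filter/cF.
  + exact/cvg_at_left_filter/cF.
- by move=> x _; rewrite derive1E; have [] := dF x.
Qed.


Lemma dpow k (x : R) : is_derive x 1 (fun y : R => y ^+ k) (k%:R * x ^+ k.-1).
Proof.
apply: DeriveDef; first exact: exprn_derivable.
by rewrite exp_derive scaler1.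
Qed.

Lemma dlin (x : R) : is_derive x 1 (fun y : R => w * y) w.
Proof.
apply: DeriveDef; first exact: derivableM.
by rewrite deriveMl ?derive_id ?mulr1.
Qed.

Lemma dcos (x : R) : is_derive x 1 (fun y : R => cos (w * y)) (- sin (w * x) * w).
Proof. exact: (@is_derive1_comp _ cos (fun y => w * y) x _ _ (is_derive_cos (w * x)) (dlin x)). Qed.

Lemma dsin (x : R) : is_derive x 1 (fun y : R => sin (w * y)) (cos (w * x) * w).
Proof. exact: (@is_derive1_comp _ sin (fun y => w * y) x _ _ (is_derive_sin (w * x)) (dlin x)). Qed.

Lemma dmul (f g : R -> R) df dg (x : R) : is_derive x 1 f df -> is_derive x 1 g dg ->
  is_derive x 1 (fun y => f y * g y) (df * g x + f x * dg).
Proof.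
move=> hf hg.
have -> : (fun y => f y * g y) = (f * g)%R by apply/funext.
apply: is_derive_eq (is_deriveM hf hg) _.
by change (f x * dg + g x * df = df * g x + f x * dg); rewrite addrC mulrC.
Qed.


Lemma contM (f g : R -> R) : continuous f -> continuous g -> continuous (fun x => f x * g x).
Proof. by move=> cf cg x; exact: (continuousM (cf x) (cg x)). Qed.

Lemma contB (f g : R -> R) : continuous f -> continuous g -> continuous (fun x => f x - g x).
Proof. by move=> cf cg x; exact: (continuousB (cf x) (cg x)). Qed.

Lemma contD (f g : R -> R) : continuous f -> continuous g -> continuous (fun x => f x + g x).
Proof. by move=> cf cg x; exact: (continuousD (cf x) (cg x)). Qed.

Lemma contC (c : R) : continuous (fun _ : R => c).
Proof. by move=> x; apply: cst_continuous. Qed.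

Lemma intg (f : R -> R) : continuous f -> mu.-integrable `[-1%R, 1%R] (EFin \o f).
Proof.
move=> cf; apply: continuous_compact_integrable; first exact: segment_compact.
exact: continuous_subspaceT.
Qed.

Definition Cm k := \int[mu]_(x in `[-1%R, 1%R]) (x ^+ k * cos (w * x)).
Definition Sm k := \int[mu]_(x in `[-1%R, 1%R]) (x ^+ k * sin (w * x)).

Lemma cpow j : continuous (fun y : R => y ^+ j). Proof. exact: deriv_cont (dpow j). Qed.
Lemma ccos : continuous (fun y : R => cos (w * y)). Proof. exact: deriv_cont dcos. Qed.
Lemma csin : continuous (fun y : R => sin (w * y)). Proof. exact: deriv_cont dsin. Qed.

Lemma relC k : k%:R * Cm k.-1 - w * Sm k = cos w - (-1) ^+ k * cos w.
Proof.
have dF : forall x : R, is_derive x 1 (fun y => y ^+ k * cos (w * y))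
   (k%:R * (x ^+ k.-1 * cos (w * x)) - w * (x ^+ k * sin (w * x))).
  by move=> x; apply: is_derive_eq (dmul (dpow k x) (dcos x)) _; ring.
have cf : continuous (fun x : R => k%:R * (x ^+ k.-1 * cos (w * x)) - w * (x ^+ k * sin (w * x))).
  apply: contB; apply: contM; try exact: contC.
  + by apply: contM; [exact: cpow|exact: ccos].
  + by apply: contM; [exact: cpow|exact: csin].
have := FTC11 dF cf.
rewrite RintegralB; [|exact: measurable_itv| |]; last 2 first.
- apply: intg; apply: contM; [exact: contC| apply: contM; [exact: cpow|exact: ccos]].
- apply: intg; apply: contM; [exact: contC| apply: contM; [exact: cpow|exact: csin]].
rewrite !RintegralZl; [|exact: measurable_itv|apply: intg; apply: contM; [exact: cpow|exact: csin]
                      |exact: measurable_itv|apply: intg; apply: contM; [exact: cpow|exact: ccos]].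
rewrite -/(Cm _) -/(Sm _) => ->.
by rewrite expr1n mul1r mulr1 mulrN1 cosN.
Qed.

Lemma relS k : k%:R * Sm k.-1 + w * Cm k = sin w + (-1) ^+ k * sin w.
Proof.
have dF : forall x : R, is_derive x 1 (fun y => y ^+ k * sin (w * y))
   (k%:R * (x ^+ k.-1 * sin (w * x)) + w * (x ^+ k * cos (w * x))).
  by move=> x; apply: is_derive_eq (dmul (dpow k x) (dsin x)) _; ring.
have cf : continuous (fun x : R => k%:R * (x ^+ k.-1 * sin (w * x)) + w * (x ^+ k * cos (w * x))).
  apply: contD; apply: contM; try exact: contC.
  + by apply: contM; [exact: cpow|exact: csin].
  + by apply: contM; [exact: cpow|exact: ccos].
have := FTC11 dF cf.
rewrite RintegralD; [|exact: measurable_itv| |]; last 2 first.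
- apply: intg; apply: contM; [exact: contC| apply: contM; [exact: cpow|exact: csin]].
- apply: intg; apply: contM; [exact: contC| apply: contM; [exact: cpow|exact: ccos]].
rewrite !RintegralZl; [|exact: measurable_itv|apply: intg; apply: contM; [exact: cpow|exact: ccos]
                      |exact: measurable_itv|apply: intg; apply: contM; [exact: cpow|exact: csin]].
rewrite -/(Cm _) -/(Sm _) => ->.
by rewrite expr1n mul1r mulr1 mulrN1 sinN mulrN opprK.
Qed.

End Ana.

Local Open Scope classical_set_scope.

Theorem proposition4 (R : realType) :
  ~ (exists (n : nat) (w : R),
       (1 <= n)%N /\ 0 < w /\ hankel_det n.-1 w = 0 /\ hankel_det n w = 0).
Proof.
move=> [n [w [n1 [w0 [h1 h2]]]]].
pose z : R[i] := Complex 0 w.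
pose E : R[i] := Complex (cos w) (sin w).
pose E' : R[i] := Complex (cos w) (- sin w).
have z0 : z != 0 by rewrite eq_complex /= eqxx /= gt_eqF.
have E0 : E != 0.
  apply/negP; rewrite eq_complex /= => /andP [/eqP c0 /eqP s0].
  by have := cos2Dsin2 w; rewrite c0 s0 expr0n /= addr0 => /eqP; rewrite eq_sym oner_eq0.
have E'0 : E' != 0.
  apply/negP; rewrite eq_complex /= oppr_eq0 => /andP [/eqP c0 /eqP s0].
  by have := cos2Dsin2 w; rewrite c0 s0 expr0n /= addr0 => /eqP; rewrite eq_sym oner_eq0.
have rec : forall k, z * moment k w + k%:R * moment k.-1 w = E - (-1) ^+ k * E'.
  move=> k; have hC := relC w k; have hS := relS w k.
  rewrite -(rmorph_nat (real_complex R)) /moment -/(Cm w _) -/(Sm w _) -/(Cm w k.-1) -/(Sm w k.-1).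
  move: hC hS; rewrite -(signr_odd R[i] k) -(signr_odd R k); case: (odd k) => /= hC hS.
  - rewrite expr1 mulN1r opprK; apply/eqP; rewrite eq_complex /=; apply/andP; split; apply/eqP; lra.
  - rewrite expr0 mul1r; apply/eqP; rewrite eq_complex /=; apply/andP; split; apply/eqP; lra.
apply: (main_alg z0 E0 E'0 rec (k := n.-1)); first exact: h1.
by rewrite prednK.
Qed.
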